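(* Let $Q:(-\infty,-1)\to(-\infty,0)$ be the inverse of the strictly increasing function $G\mapsto G-e^G$ on $(-\infty,0)$, and define $R:\mathbb{R}\to\mathbb{R}$ by $R(V)=-2(1-e^{Q(V)})^2$ for $V<-1$ and $R(V)=4(V+1)$ for $V\ge -1$. For each $m<-1$ let $n(m)>0$ be the unique number such that the solution of the initial value problem $V''-3V'=R(V)$, $V(0)=m$, $V'(0)=-n(m)$ (prime denoting $d/ds$) is negative-valued and solves the two-point boundary value problem $V''-3V'=R(V)$ on $(-\infty,\infty)$, $V(-\infty)=-1$, $V(\infty)=-\infty$. Then the correct shooting slope $-n(m)<0$ depends on $m$ continuously and monotonically, so that $n(m_1)>n(m_2)>0$ whenever $m_1<m_2<-1$.
   Context: Existence and uniqueness of $n(m)$ for each $m<-1$ is established in the paper; the claim concerns the resulting function $m\mapsto n(m)$ on $(-\infty,-1)$. *)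

(* Defs.v *)
From Stdlib Require Import Reals Lra ClassicalEpsilon.
From Coquelicot Require Import Coquelicot.
Open Scope R_scope.

(* Q : (-oo,-1) -> (-oo,0), inverse of G |-> G - exp G on (-oo,0).
   For v < -1 this picks the (unique) G < 0 with G - exp G = v;
   outside the domain its value is irrelevant. *)
Definition Qinv (v : R) : R :=
  epsilon (inhabits 0) (fun G => G < 0 /\ G - exp G = v).

Definition Rfun (V : R) : R :=
  if Rlt_dec V (-1) then -2 * (1 - exp (Qinv V)) ^ 2 else 4 * (V + 1).

(* [good m n]: the solution of V'' - 3V' = R(V), V(0) = m, V'(0) = -n
   is defined on all of R, is negative-valued, and satisfies
   V(-oo) = -1, V(+oo) = -oo.  (The IVP has a unique solution since R is C^1,
   so "there exists a solution with these properties" is the same as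
   "the solution has these properties".) *)
Definition good (m n : R) : Prop :=
  exists V V' : R -> R,
    (forall s, is_derive V s (V' s)) /\
    (forall s, is_derive V' s (3 * V' s + Rfun (V s))) /\
    V 0 = m /\ V' 0 = - n /\
    (forall s, V s < 0) /\
    is_lim V m_infty (-1) /\
    is_lim V p_infty m_infty.

(* Main.v *)
Require Import Defs.
From Stdlib Require Import Reals Lra.
From Coquelicot Require Import Coquelicot.
Open Scope R_scope.

Lemma lim_minf V (l : R) : is_lim V m_infty l -> forall eps, 0 < eps -> exists M, forall x, x < M -> Rabs (V x - l) < eps.
Proof. intros H eps He.
assert (HP : Rbar_locally (Finite l) (fun y => Rabs (y - l) < eps)).
{ exists (mkposreal eps He). intros y Hy. exact Hy. }
destruct (H _ HP) as [M HM]. exists M; exact HM. Qed.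
Lemma lim_pinf V : is_lim V p_infty m_infty -> forall K, exists M, forall x, M < x -> V x < K.
Proof. intros H K.
assert (HP : Rbar_locally m_infty (fun y => y < K)) by (exists K; auto).
destruct (H _ HP) as [M HM]. exists M; exact HM. Qed.

Lemma cont_eps f x : continuous f x -> forall eps, 0 < eps ->
  exists d, 0 < d /\ forall y, Rabs (y - x) < d -> Rabs (f y - f x) < eps.
Proof. intros H eps He.
assert (HP : locally (f x) (fun y => Rabs (y - f x) < eps)).
{ exists (mkposreal eps He). intros y Hy. exact Hy. }
destruct (H _ HP) as [d Hd]. exists d. split. apply cond_pos. intros y Hy. apply Hd. exact Hy. Qed.

Lemma mvt f df a b : (forall x, is_derive f x (df x)) -> a < b ->
  exists c, a < c < b /\ f b - f a = df c * (b - a).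
Proof. intros H Hab. destruct (MVT_cor2 f df a b Hab) as [c [H1 H2]].
- intros c _. apply is_derive_Reals. apply H.
- exists c; split; auto. Qed.

Lemma Rfun_le v : v <= -1 -> Rfun v <= 0.
Proof. intros H. unfold Rfun. destruct (Rlt_dec v (-1)).
- assert (0 <= (1 - exp (Qinv v)) ^ 2) by (apply pow2_ge_0). lra.
- lra. Qed.
Lemma Rfun_gt v : -1 < v -> Rfun v = 4 * (v + 1).
Proof. intros H. unfold Rfun. destruct (Rlt_dec v (-1)); lra. Qed.

Section Traj.
Variables V V' : R -> R.
Hypothesis HV : forall s, is_derive V s (V' s).
Hypothesis HV' : forall s, is_derive V' s (3 * V' s + Rfun (V s)).
Hypothesis Hlm : is_lim V m_infty (-1).
Hypothesis Hlp : is_lim V p_infty m_infty.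

Let Z s := exp (-3 * s) * V' s.

Lemma Zder s : is_derive Z s (exp (-3 * s) * Rfun (V s)).
Proof.
  assert (He : is_derive (fun s => exp (-3 * s)) s (-3 * exp (-3 * s))).
  { auto_derive; auto; ring. }
  pose proof (is_derive_mult _ _ s _ _ He (HV' s) (fun n m => Rmult_comm n m)) as H.
  replace (exp (-3 * s) * Rfun (V s)) with
    (plus (mult (-3 * exp (-3 * s)) (V' s)) (mult (exp (-3 * s)) (3 * V' s + Rfun (V s)))).
  - exact H.
  - unfold plus, mult; simpl. ring.
Qed.

Lemma Zinc x y : (forall t, x <= t <= y -> -1 < V t) -> x < y -> Z x < Z y.
Proof. intros H Hxy. destruct (mvt Z (fun s => exp (-3 * s) * Rfun (V s)) x y Zder Hxy) as [c [Hc E]].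
  rewrite Rfun_gt in E by (apply H; lra).
  assert (0 < exp (-3 * c)) by apply exp_pos.
  assert (-1 < V c) by (apply H; lra).
  assert (0 < exp (-3 * c) * (4 * (V c + 1)) * (y - x)) by (repeat apply Rmult_lt_0_compat; lra).
  lra. Qed.

Lemma Vcont s : continuity_pt V s.
Proof. apply continuity_pt_filterlim. exact (ex_derive_continuous (V:=R_NormedModule) V s (ex_intro _ _ (HV s))). Qed.

Lemma Zsign s : (0 < Z s -> 0 < V' s) /\ (Z s < 0 -> V' s < 0) /\ (0 <= Z s -> 0 <= V' s)
  /\ (Z s <= 0 -> V' s <= 0).
Proof. unfold Z. assert (0 < exp (-3 * s)) by apply exp_pos.
  repeat split; intros; nra. Qed.

Lemma P1 s : V s <= -1.
Proof.
  destruct (Rle_or_lt (V s) (-1)) as [|Ha]; [assumption|exfalso].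
  set (a := s) in *.
  destruct (lim_minf V (-1) Hlm (V a + 1) ltac:(lra)) as [M1 HM1].
  destruct (lim_pinf V Hlp (V a)) as [M2 HM2].
  set (A := Rmin M1 a - 1). set (B := Rmax M2 a + 1).
  assert (HA : A < a) by (unfold A; pose proof (Rmin_r M1 a); lra).
  assert (HB : a < B) by (unfold B; pose proof (Rmax_r M2 a); lra).
  assert (VA : V A < V a).
  { assert (A < M1) by (unfold A; pose proof (Rmin_l M1 a); lra).
    specialize (HM1 A H). apply Rabs_def2 in HM1. lra. }
  assert (VB : V B < V a).
  { apply HM2. unfold B; pose proof (Rmax_l M2 a); lra. }
  destruct (continuity_ab_maj V A B ltac:(lra) (fun c _ => Vcont c)) as [c [Hmax Hc]].
  assert (Vc : V a <= V c) by (apply Hmax; lra).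
  assert (HAc : A < c). { destruct (Req_dec A c); [subst; lra|lra]. }
  assert (HcB : c < B). { destruct (Req_dec c B); [subst; lra|lra]. }
  assert (Hcc : continuous V c) by (apply continuity_pt_filterlim, Vcont).
  destruct (cont_eps V c Hcc (V c + 1) ltac:(lra)) as [d [Hd Hdd]].
  assert (Hnear : forall t, Rabs (t - c) < d -> -1 < V t).
  { intros t Ht. specialize (Hdd t Ht). apply Rabs_def2 in Hdd. lra. }
  set (h := Rmin d (Rmin (c - A) (B - c)) / 2).
  assert (Hm : 0 < Rmin d (Rmin (c - A) (B - c))) by (repeat apply Rmin_pos; lra).
  pose proof (Rmin_l d (Rmin (c - A) (B - c))).
  pose proof (Rmin_r d (Rmin (c - A) (B - c))).
  pose proof (Rmin_l (c - A) (B - c)). pose proof (Rmin_r (c - A) (B - c)).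
  assert (Hh : 0 < h /\ h < d /\ A <= c - h /\ c + h <= B) by (unfold h; lra).
  clearbody h.
  assert (Znear : forall x y, c - h <= x -> y <= c + h -> x < y -> Z x < Z y).
  { intros x y Hx Hy Hxy. apply Zinc; auto. intros t Ht. apply Hnear.
    apply Rabs_def1; lra. }
  destruct (Rle_or_lt 0 (V' c)) as [Hp|Hn].
  - destruct (mvt V V' c (c + h) HV ltac:(lra)) as [xi [Hxi E]].
    assert (Z c < Z xi) by (apply Znear; lra).
    assert (0 <= Z c) by (unfold Z; pose proof (exp_pos (-3 * c)); nra).
    assert (0 < V' xi) by (apply Zsign; lra).
    assert (V (c + h) <= V c) by (apply Hmax; lra). nra.
  - destruct (mvt V V' (c - h) c HV ltac:(lra)) as [xi [Hxi E]].
    assert (Z xi < Z c) by (apply Znear; lra).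
    assert (Z c < 0) by (unfold Z; pose proof (exp_pos (-3 * c)); nra).
    assert (V' xi < 0) by (apply Zsign; lra).
    assert (V (c - h) <= V c) by (apply Hmax; lra). nra.
Qed.


Lemma Zdec x y : x <= y -> Z y <= Z x.
Proof. intros H. destruct (Req_dec x y) as [->|Hne]; [lra|].
  destruct (mvt Z (fun s => exp (-3 * s) * Rfun (V s)) x y Zder ltac:(lra)) as [c [Hc E]].
  assert (0 < exp (-3 * c)) by apply exp_pos.
  assert (Rfun (V c) <= 0) by (apply Rfun_le, P1).
  assert (exp (-3 * c) * Rfun (V c) <= 0) by nra.
  nra. Qed.

Lemma Vneg s : V s < -1 -> V' s < 0.
Proof. intros Hs. destruct (Rlt_or_le (V' s) 0) as [|Hp]; [assumption|exfalso].
  assert (HZ : 0 <= Z s) by (unfold Z; pose proof (exp_pos (-3 * s)); nra).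
  destruct (lim_minf V (-1) Hlm (-1 - V s) ltac:(lra)) as [M HM].
  set (x := Rmin M s - 1).
  assert (x < M) by (unfold x; pose proof (Rmin_l M s); lra).
  assert (x < s) by (unfold x; pose proof (Rmin_r M s); lra).
  specialize (HM x ltac:(assumption)). apply Rabs_def2 in HM.
  destruct (mvt V V' x s HV ltac:(assumption)) as [c [Hc E]].
  assert (Z s <= Z c) by (apply Zdec; lra).
  assert (0 <= V' c) by (apply Zsign; lra).
  nra. Qed.

Lemma Vdec s u : V s < -1 -> s < u -> V' u < V' s /\ V u < V s.
Proof. intros Hs Hu.
  assert (Hl : forall t, s < t -> V' t < V' s).
  { intros t Ht. pose proof (Vneg s Hs).
    assert (Z t <= Z s) by (apply Zdec; lra).
    assert (Z s < 0) by (unfold Z; pose proof (exp_pos (-3 * s)); nra).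
    unfold Z in *.
    assert (E1 : V' t = exp (3 * t) * (exp (-3 * t) * V' t)).
    { rewrite <- Rmult_assoc, <- exp_plus. replace (3 * t + -3 * t) with 0 by ring. rewrite exp_0; ring. }
    assert (E2 : V' s = exp (3 * s) * (exp (-3 * s) * V' s)).
    { rewrite <- Rmult_assoc, <- exp_plus. replace (3 * s + -3 * s) with 0 by ring. rewrite exp_0; ring. }
    assert (exp (3 * s) < exp (3 * t)) by (apply exp_increasing; lra).
    pose proof (exp_pos (3 * s)).
    rewrite E1, E2. nra. }
  split; [apply Hl; exact Hu|].
  destruct (mvt V V' s u HV Hu) as [c [Hc E]].
  pose proof (Vneg s Hs). assert (V' c < V' s) by (apply Hl; lra). nra. Qed.

Lemma Surj m : m < -1 -> exists t, V t = m.
Proof. intros Hm.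
  destruct (lim_minf V (-1) Hlm (-1 - m) ltac:(lra)) as [M HM].
  destruct (lim_pinf V Hlp m) as [M2 HM2].
  specialize (HM (M - 1) ltac:(lra)). apply Rabs_def2 in HM.
  specialize (HM2 (M2 + 1) ltac:(lra)).
  destruct (IVT_gen V (M - 1) (M2 + 1) m (fun x => Vcont x)) as [t [_ Ht]].
  - unfold Rmin, Rmax; destruct Rle_dec; lra.
  - exists t; exact Ht. Qed.
End Traj.

Lemma good_shift V V' : (forall s, is_derive V s (V' s)) ->
  (forall s, is_derive V' s (3 * V' s + Rfun (V s))) ->
  (forall s, V s < 0) -> is_lim V m_infty (-1) -> is_lim V p_infty m_infty ->
  forall t, good (V t) (- V' t).
Proof. intros HV HV' Hn Hlm Hlp t.
  assert (Hg : forall u, is_derive (fun x => x + t) u 1) by (intros; auto_derive; auto).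
  exists (fun u => V (u + t)), (fun u => V' (u + t)). refine (conj _ (conj _ (conj _ (conj _ (conj _ (conj _ _)))))).
  - intros u. pose proof (is_derive_comp V (fun x => x + t) u _ _ (HV (u + t)) (Hg u)) as H.
    replace (V' (u + t)) with (scal 1 (V' (u + t))) by (unfold scal; simpl; unfold mult; simpl; ring).
    exact H.
  - intros u. pose proof (is_derive_comp V' (fun x => x + t) u _ _ (HV' (u + t)) (Hg u)) as H.
    replace (3 * V' (u + t) + Rfun (V (u + t))) with (scal 1 (3 * V' (u + t) + Rfun (V (u + t)))) by (unfold scal; simpl; unfold mult; simpl; ring).
    exact H.
  - simpl; now rewrite Rplus_0_l.
  - simpl; rewrite Rplus_0_l; symmetry; apply Ropp_involutive.
  - intros; apply Hn.
  - eapply filterlim_comp; [|exact Hlm].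
    intros P [M HM]. exists (M - t). intros x Hx. apply HM. lra.
  - eapply filterlim_comp; [|exact Hlp].
    intros P [M HM]. exists (M - t). intros x Hx. apply HM. lra.
Qed.

Theorem lemma4p7 (n : R -> R)
  (hn : forall m, m < -1 ->
          0 < n m /\ good m (n m) /\
          (forall n', 0 < n' -> good m n' -> n' = n m)) :
  (forall m, m < -1 -> continuous n m) /\
  (forall m1 m2, m1 < m2 -> m2 < -1 -> n m1 > n m2 /\ n m2 > 0).
Proof.
  destruct (hn (-2) ltac:(lra)) as [_ [[V [V' [HV [HV' [_ [_ [Hneg [Hlm Hlp]]]]]]]] _]].
  assert (key : forall t, V t < -1 -> n (V t) = - V' t).
  { intros t Ht. destruct (hn (V t) Ht) as [_ [_ Hu]]. symmetry. apply Hu.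
    - pose proof (Vneg V V' HV HV' Hlm Hlp t Ht). lra.
    - apply good_shift; auto. }
  split.
  - intros m Hm. destruct (Surj V V' HV Hlm Hlp m Hm) as [t0 Ht0].
    assert (HV'c : continuous V' t0).
    { exact (ex_derive_continuous (V:=R_NormedModule) V' t0 (ex_intro _ _ (HV' t0))). }
    unfold continuous, filterlim, filter_le, filtermap.
    intros P [eps HP].
    destruct (cont_eps V' t0 HV'c eps (cond_pos eps)) as [d [Hd Hdd]].
    set (a := t0 - d / 2). set (b := t0 + d / 2).
    assert (Vb : V b < m) by (rewrite <- Ht0; apply (Vdec V V' HV HV' Hlm Hlp); unfold b; lra).
    assert (Va : m < V a).
    { destruct (Rlt_or_le (V a) (-1)) as [Hl|Hl]; [|lra].
      rewrite <- Ht0. apply (Vdec V V' HV HV' Hlm Hlp); auto. unfold a; lra. }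
    pose proof (P1 V V' HV HV' Hlm Hlp a) as Pa.
    assert (Hdel : 0 < Rmin (V a - m) (m - V b)) by (apply Rmin_pos; lra).
    exists (mkposreal _ Hdel). intros y Hy.
    change (Rabs (y - m) < Rmin (V a - m) (m - V b)) in Hy.
    pose proof (Rmin_l (V a - m) (m - V b)). pose proof (Rmin_r (V a - m) (m - V b)).
    apply Rabs_def2 in Hy.
    destruct (IVT_gen V a b y (fun x => Vcont V V' HV x)) as [t [Ht Hty]].
    { unfold Rmin, Rmax; destruct Rle_dec; lra. }
    assert (Hab : a <= b) by (unfold a, b; lra).
    rewrite Rmin_left in Ht by lra. rewrite Rmax_right in Ht by lra.
    apply HP. change (Rabs (n y - n m) < eps).
    rewrite <- Hty, <- Ht0, !key by lra.
    replace (- V' t - - V' t0) with (- (V' t - V' t0)) by ring.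
    rewrite Rabs_Ropp. apply Hdd. apply Rabs_def1; unfold a, b in Ht; lra.
  - intros m1 m2 H12 H2.
    destruct (Surj V V' HV Hlm Hlp m1 ltac:(lra)) as [t1 Ht1].
    destruct (Surj V V' HV Hlm Hlp m2 ltac:(lra)) as [t2 Ht2].
    split; [|destruct (hn m2 H2); lra].
    assert (t2 < t1).
    { destruct (Rlt_or_le t2 t1) as [|Hle]; auto.
      destruct (Req_dec t1 t2); [subst; lra|].
      destruct (Vdec V V' HV HV' Hlm Hlp t1 t2); [lra|lra|lra]. }
    destruct (Vdec V V' HV HV' Hlm Hlp t2 t1) as [Hd _]; [lra|lra|].
    rewrite <- Ht1, <- Ht2, !key by lra. lra.
Qed.
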